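(* Let $S>0$, $I\ge1$, $N_1,\dots,N_I$ positive integers and $\theta_1>\dots>\theta_I>0$. Let $\lambda(k)=\Big(\frac{\sum_{i=1}^k N_i\sqrt{\theta_i}}{S+\sum_{i=1}^k N_i}\Big)^2$, $K=\max\{k\in\{1,\dots,I\}:\theta_k>\lambda(k)\}$, $\lambda^*=\lambda(K)$, and for $i\le K$ let $p^*_i=\sqrt{\theta_i\lambda^*}$ and $s^*_i=\sqrt{\theta_i/\lambda^*}-1$ (the optimal complete-information differentiated prices and allocations). For each $q\in\{1,\dots,K-1\}$ the equation $$t^2\ln t-(t^2-1)+\frac{t\sum_{k=1}^{q}N_k+N_{q+1}}{S+\sum_{k=1}^{K}N_k}(t-1)=0$$ has a unique solution $t_q$ in $t>1$. Moreover, if $\sqrt{\theta_q/\theta_{q+1}}\ge t_q$ for all $q=1,\dots,K-1$, then there exist quantity thresholds $s^1_{th}>s^2_{th}>\dots>s^{K-1}_{th}>0$ such that, under the quantity-based price menu $p(s)=p^*_q$ for $s^q_{th}<s\le s^{q-1}_{th}$ ($q=1,\dots,K$, with $s^0_{th}=+\infty$, $s^K_{th}=0$), for every $i\in\{1,\dots,K\}$ the quantity $s^*_i$ maximizes a group-$i$ user's surplus $\theta_i\ln(1+s)-p(s)s$ over $s\ge0$ (with surplus $0$ at $s=0$) and is charged unit price $p(s^*_i)=p^*_i$; consequently the menu attains the same revenue $\sum_{i=1}^K N_ip^*_is^*_i$ as optimal complete price differentiation under complete information.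
   Context: Group $i$ consists of $N_i$ users, each with utility $\theta_i\ln(1+s)$. Under incomplete information the provider (with total resource $S$) does not know which group each user belongs to; it publishes one menu in which the unit price depends on the purchased quantity, and each user freely chooses a quantity to maximize utility minus payment $p(s)s$. *)

(* Defs.v *)
From Stdlib Require Import Reals Lra Lia.
Open Scope R_scope.

Fixpoint sumR (f : nat -> R) (k : nat) : R :=
  match k with
  | O => 0
  | S k' => sumR f k' + f k
  end.

Definition lam (Stot : R) (N : nat -> nat) (theta : nat -> R) (k : nat) : R :=
  (sumR (fun i => INR (N i) * sqrt (theta i)) k / (Stot + sumR (fun i => INR (N i)) k)) ^ 2.

Definition pstar (theta : nat -> R) (lstar : R) (i : nat) : R := sqrt (theta i * lstar).
Definition sstar (theta : nat -> R) (lstar : R) (i : nat) : R := sqrt (theta i / lstar) - 1.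

Definition teq (Stot : R) (N : nat -> nat) (K q : nat) (t : R) : R :=
  t ^ 2 * ln t - (t ^ 2 - 1)
  + (t * sumR (fun k => INR (N k)) q + INR (N (q + 1)%nat))
    / (Stot + sumR (fun k => INR (N k)) K) * (t - 1).

(* lower end of band q: s^q_th for q < K, and s^K_th = 0 *)
Definition lowth (th : nat -> R) (K q : nat) : R :=
  if (q <? K)%nat then th q else 0.

Definition surplus (theta : nat -> R) (pm : R -> R) (i : nat) (s : R) : R :=
  theta i * ln (1 + s) - pm s * s.

(* Main.v *)
Require Import Defs.
From Stdlib Require Import Reals Lra Lia Psatz Ranalysis5.
Open Scope R_scope.

Lemma ln_le_m1 x : 0 < x -> ln x <= x - 1.
Proof. intro H. pose proof (exp_ineq1_le (ln x)). rewrite exp_ln in H0; lra. Qed.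

Lemma ln_div' x y : 0 < x -> 0 < y -> ln (x / y) = ln x - ln y.
Proof. intros. unfold Rdiv. rewrite ln_mult, ln_Rinv; try lra.
  apply Rinv_0_lt_compat; lra. Qed.

Definition hh t := t ^ 2 * ln t - (t ^ 2 - 1).

Lemma ln_ge0 x : 1 <= x -> 0 <= ln x.
Proof. intro. rewrite <- ln_1. destruct (Req_dec x 1). subst; lra.
  left; apply ln_increasing; lra. Qed.

Lemma tangent s t : 1 <= s -> s <= t ->
  hh s + (2 * s * ln s - s) * (t - s) <= hh t.
Proof.
  intros Hs Hst. unfold hh.
  assert (Hr : ln t = ln s + ln (t / s)).
  { rewrite ln_div'; lra. }
  assert (Hl : ln (s / t) <= s / t - 1) by (apply ln_le_m1; apply Rdiv_lt_0_compat; lra).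
  rewrite ln_div' in Hl by lra.
  rewrite ln_div' in Hr by lra.
  assert (0 <= ln s) by (apply ln_ge0; lra).
  assert (Hm : t * (ln s - ln t) <= s - t).
  { assert (t * (s / t - 1) = s - t) by (field; lra).
    rewrite <- H0. apply Rmult_le_compat_l; lra. }
  assert (E : t ^ 2 * ln t - (t ^ 2 - 1) - (s ^ 2 * ln s - (s ^ 2 - 1) + (2 * s * ln s - s) * (t - s))
     = ln s * (t - s) ^ 2 + t * (t * (ln t - ln s) - (t - s))) by ring.
  assert (0 <= ln s * (t - s) ^ 2) by (apply Rmult_le_pos; nra).
  assert (0 <= t * (t * (ln t - ln s) - (t - s))) by (apply Rmult_le_pos; nra).
  lra.
Qed.

Lemma nn_pos s : 1 <= s -> 0 <= (2 * s * ln s - s) * (s - 1) - hh s.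
Proof.
  intro Hs. unfold hh.
  assert (E : (2 * s * ln s - s) * (s - 1) - (s ^ 2 * ln s - (s ^ 2 - 1))
    = ln s * (s * (s - 2)) + s - 1) by ring.
  rewrite E.
  assert (0 <= ln s) by (apply ln_ge0; lra).
  assert (ln s <= s - 1) by (apply ln_le_m1; lra).
  destruct (Rle_dec 2 s).
  - assert (0 <= ln s * (s * (s - 2))) by (apply Rmult_le_pos; nra). lra.
  - assert (ln s * (s * (2 - s)) <= (s - 1) * (s * (2 - s))) by (apply Rmult_le_compat_r; nra).
    assert (E2 : s - 1 - (s - 1) * (s * (2 - s)) = (s - 1) ^ 3) by ring.
    assert (0 <= (s - 1) ^ 3) by (apply pow_le; lra).
    lra.
Qed.

Lemma secant s t : 1 <= s -> s <= t -> hh s * (t - 1) <= hh t * (s - 1).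
Proof.
  intros. pose proof (tangent s t H H0). pose proof (nn_pos s H).
  assert (hh s * (t - 1) <= (hh s + (2 * s * ln s - s) * (t - s)) * (s - 1)).
  { assert (E: (hh s + (2 * s * ln s - s) * (t - s)) * (s - 1) - hh s * (t - 1)
      = (t - s) * ((2 * s * ln s - s) * (s - 1) - hh s)) by ring.
    assert (0 <= (t - s) * ((2 * s * ln s - s) * (s - 1) - hh s)) by (apply Rmult_le_pos; lra).
    lra. }
  assert ((hh s + (2 * s * ln s - s) * (t - s)) * (s - 1) <= hh t * (s - 1))
    by (apply Rmult_le_compat_r; lra).
  lra.
Qed.

Definition ff A B D t := hh t + (t * A + B) / D * (t - 1).

Lemma ff_sec A B D s t : 0 < D -> 1 <= s -> s <= t ->
  ff A B D s * (t - 1) + A / D * (t - 1) * (s - 1) * (t - s) <= ff A B D t * (s - 1).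
Proof.
  intros HD Hs Hst. unfold ff. pose proof (secant s t Hs Hst).
  assert (E : (hh t + (t * A + B) / D * (t - 1)) * (s - 1) -
     ((hh s + (s * A + B) / D * (s - 1)) * (t - 1) + A / D * (t - 1) * (s - 1) * (t - s))
     = hh t * (s - 1) - hh s * (t - 1)) by (field; lra).
  lra.
Qed.

Lemma ff_cont A B D a : 0 < a -> continuity_pt (ff A B D) a.
Proof.
  intro Ha. unfold ff, hh.
  apply derivable_continuous_pt.
  apply (derivable_pt_plus (fun t => t ^ 2 * ln t - (t ^ 2 - 1)) (fun t => (t * A + B) / D * (t - 1))).
  - apply derivable_pt_minus.
    + apply derivable_pt_mult. apply derivable_pt_pow. 
      exists (/ a). apply derivable_pt_lim_ln; lra.
    + apply derivable_pt_minus. apply derivable_pt_pow. apply derivable_pt_const.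
  - apply derivable_pt_mult.
    + unfold Rdiv. apply derivable_pt_mult. apply derivable_pt_plus.
      apply derivable_pt_mult. apply derivable_pt_id. apply derivable_pt_const.
      apply derivable_pt_const. apply derivable_pt_const.
    + apply derivable_pt_minus. apply derivable_pt_id. apply derivable_pt_const.
Qed.

Lemma ff_root A B D : 0 < A -> 0 <= B -> 0 < D -> A + B < D ->
  exists! t, 1 < t /\ ff A B D t = 0.
Proof.
  intros HA HB HD HAB.
  set (a := A / D). set (b := B / D).
  assert (Ha : 0 < a) by (apply Rdiv_lt_0_compat; lra).
  assert (Hb : 0 <= b) by (unfold b; apply Rmult_le_pos; [lra| left; apply Rinv_0_lt_compat; lra]).
  assert (Hab : a + b < 1).
  { unfold a, b. apply (Rmult_lt_reg_r D); try lra. field_simplify; lra. }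
  set (e := 1 - a - b). set (t0 := 1 + e / 4).
  assert (He : 0 < e) by (unfold e; lra).
  assert (Ht0 : ff A B D t0 < 0).
  { unfold ff, hh.
    assert (ln t0 <= t0 - 1) by (apply ln_le_m1; unfold t0; lra).
    assert (Hc : (t0 * A + B) / D = a * t0 + b) by (unfold a, b; field; lra).
    rewrite Hc.
    assert (t0 ^ 2 * ln t0 <= t0 ^ 2 * (t0 - 1)) by (apply Rmult_le_compat_l; [apply pow2_ge_0| lra]).
    assert (E : t0 ^ 2 * (t0 - 1) - (t0 ^ 2 - 1) + (a * t0 + b) * (t0 - 1)
       = (e / 4) * ((e/4) ^ 2 + (e/4) + a * (e/4) - e)) by (unfold t0, e; ring).
    assert (e <= 1) by (unfold e; lra).
    assert ((e/4) ^ 2 + (e/4) + a * (e/4) - e < 0).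
    { assert ((e/4)^2 <= e/4) by nra. assert (a * (e/4) <= e / 4) by nra. lra. }
    assert ((e / 4) * ((e/4) ^ 2 + (e/4) + a * (e/4) - e) < 0).
    { assert (0 < e / 4) by lra. nra. }
    lra. }
  set (M := exp 2).
  assert (HM : 0 < ff A B D M).
  { unfold ff, hh. unfold M. rewrite ln_exp.
    assert (1 < exp 2). { rewrite <- exp_0. apply exp_increasing. lra. }
    assert (0 <= exp 2 * A) by (apply Rmult_le_pos; lra).
    assert (0 <= (exp 2 * A + B) / D) by (apply Rmult_le_pos; [lra | left; apply Rinv_0_lt_compat; lra]).
    assert (0 <= (exp 2 * A + B) / D * (exp 2 - 1)) by (apply Rmult_le_pos; lra).
    nra. }
  assert (Ht0M : t0 < M).
  { unfold M, t0. assert (e <= 1) by (unfold e; lra). assert (1 + 2 < exp 2) by (apply exp_ineq1; intro; lra). lra. }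
  destruct (IVT_interv (ff A B D) t0 M) as [z [Hz1 Hz2]]; auto.
  { intros. apply ff_cont. unfold t0 in *; lra. }
  assert (Hz : 1 < z) by (unfold t0 in *; lra).
  exists z. split; [split; auto|].
  intros y [Hy1 Hy2].
  destruct (Rtotal_order z y) as [Hl|[Heq|Hl]]; auto.
  - pose proof (ff_sec A B D z y HD (Rlt_le _ _ Hz) (Rlt_le _ _ Hl)).
    rewrite Hz2, Hy2 in H.
    assert (0 < A / D * (y - 1) * (z - 1) * (y - z)).
    { repeat apply Rmult_lt_0_compat; try lra; apply Rinv_0_lt_compat; lra. }
    lra.
  - pose proof (ff_sec A B D y z HD (Rlt_le _ _ Hy1) (Rlt_le _ _ Hl)).
    rewrite Hz2, Hy2 in H.
    assert (0 < A / D * (z - 1) * (y - 1) * (z - y)).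
    { repeat apply Rmult_lt_0_compat; try lra; apply Rinv_0_lt_compat; lra. }
    lra.
Qed.

Lemma ff_nonneg A B D tq t : 0 < D -> 0 <= A -> 1 < tq -> tq <= t -> ff A B D tq = 0 -> 0 <= ff A B D t.
Proof.
  intros HD HA H1 H2 H3. pose proof (ff_sec A B D tq t HD (Rlt_le _ _ H1) H2).
  rewrite H3 in H.
  assert (0 <= A / D * (t - 1) * (tq - 1) * (t - tq)).
  { assert (0 <= A / D) by (apply Rmult_le_pos; [lra| left; apply Rinv_0_lt_compat; lra]).
    apply Rmult_le_pos; [apply Rmult_le_pos; [apply Rmult_le_pos|]|]; lra. }
  assert (0 <= ff A B D t * (tq - 1)) by lra.
  destruct (Rle_dec 0 (ff A B D t)); auto.
  assert (ff A B D t * (tq - 1) < 0) by (apply Rmult_neg_pos; lra). lra.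
Qed.

Lemma surpU th p s : 0 < th -> 0 < p -> -1 < s ->
  th * ln (1 + s) - p * s <= th * ln (th / p) - p * (th / p - 1).
Proof.
  intros Ht Hp Hs.
  assert (Hq : 0 < th / p) by (apply Rdiv_lt_0_compat; lra).
  assert (H := ln_le_m1 ((1 + s) / (th / p)) ltac:(apply Rdiv_lt_0_compat; lra)).
  rewrite ln_div' in H by lra.
  assert (E : th * ((1 + s) / (th / p) - 1) = p * (1 + s) - th) by (field; lra).
  assert (th * (ln (1 + s) - ln (th / p)) <= th * ((1 + s) / (th / p) - 1))
    by (apply Rmult_le_compat_l; lra).
  assert (E2 : p * (th / p - 1) = th - p) by (field; lra).
  lra.
Qed.

Lemma surpM th p s s' : 0 < th -> 0 < p -> 0 <= s -> s <= s' -> p * (1 + s') <= th ->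
  th * ln (1 + s) - p * s <= th * ln (1 + s') - p * s'.
Proof.
  intros Ht Hp Hs Hss Hpt.
  assert (H := ln_le_m1 ((1 + s) / (1 + s')) ltac:(apply Rdiv_lt_0_compat; lra)).
  rewrite ln_div' in H by lra.
  assert (E : (1 + s) / (1 + s') - 1 = (s - s') / (1 + s')) by (field; lra).
  rewrite E in H.
  assert (th * (ln (1 + s) - ln (1 + s')) <= th * ((s - s') / (1 + s')))
    by (apply Rmult_le_compat_l; lra).
  assert (E2 : th * ((s - s') / (1 + s')) = (s - s') * (th / (1 + s'))) by (field; lra).
  assert (p <= th / (1 + s')).
  { apply (Rmult_le_reg_r (1 + s')); try lra. field_simplify; lra. }
  assert ((s - s') * (th / (1 + s')) <= (s - s') * p) by (apply Rmult_le_compat_neg_l; lra).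
  lra.
Qed.

Lemma sumR_le f g n : (forall k, (1 <= k <= n)%nat -> f k <= g k) -> sumR f n <= sumR g n.
Proof.
  induction n; simpl; intros H. lra.
  assert (f (S n) <= g (S n)) by (apply H; lia).
  assert (sumR f n <= sumR g n) by (apply IHn; intros; apply H; lia). lra.
Qed.

Lemma sumR_ext f g n : (forall k, (1 <= k <= n)%nat -> f k = g k) -> sumR f n = sumR g n.
Proof.
  induction n; simpl; intros H. lra.
  rewrite (H (S n)) by lia. rewrite IHn; auto. intros; apply H; lia.
Qed.

Lemma sumR_mono f m n : (forall k, (1 <= k <= n)%nat -> 0 <= f k) -> (m <= n)%nat ->
  sumR f m <= sumR f n.
Proof.
  intros H Hmn. induction Hmn. lra.
  simpl. assert (0 <= f (S m0)) by (apply H; lia).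
  assert (sumR f m <= sumR f m0) by (apply IHHmn; intros; apply H; lia). lra.
Qed.

Lemma sumR_pos f n : (forall k, (1 <= k <= n)%nat -> 0 < f k) -> (1 <= n)%nat -> 0 < sumR f n.
Proof.
  intros H Hn. destruct n. lia. simpl.
  assert (0 <= sumR f n). { apply Rle_trans with (sumR (fun _ => 0) n).
    clear. induction n; simpl; lra. apply sumR_le. intros; left; apply H; lia. }
  assert (0 < f (S n)) by (apply H; lia). lra.
Qed.

Lemma sumR_scal f c n : sumR (fun k => f k * c) n = sumR f n * c.
Proof. induction n; simpl. ring. rewrite IHn. ring. Qed.

Lemma band (th : nat -> R) K s : (1 <= K)%nat -> 0 < s ->
  exists j, (1 <= j <= K)%nat /\ lowth th K j < s /\ (j = 1%nat \/ s <= th (j - 1)%nat).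
Proof.
  intros HK Hs.
  assert (G : forall d n, (n + d = K - 1)%nat -> (n = 0%nat \/ s <= th n) ->
     exists j, (1 <= j <= K)%nat /\ lowth th K j < s /\ (j = 1%nat \/ s <= th (j - 1)%nat)).
  { induction d; intros n Hn Hc.
    - exists K. split. lia. split. unfold lowth. rewrite Nat.ltb_irrefl. lra.
      destruct Hc. left; lia. right. replace (K - 1)%nat with n by lia. auto.
    - destruct (Rlt_dec (th (S n)) s).
      + exists (S n). split. lia. split. unfold lowth.
        replace ((S n) <? K)%nat with true. auto. symmetry. apply Nat.ltb_lt. lia.
        destruct Hc. left; lia. right. replace (S n - 1)%nat with n by lia. auto.
      + apply (IHd (S n)). lia. right; lra. }
  apply (G (K - 1)%nat 0%nat). lia. left; auto.
Qed.

Lemma adjIC r1 r2 l A B D tq : 0 < l -> l < r2 -> r2 <= r1 -> 0 < D -> 0 <= A ->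
  1 < tq -> tq <= r1 / r2 -> ff A B D tq = 0 -> A * r1 + B * r2 <= l * D ->
  r1 ^ 2 * ln (1 + (r2 / l - 1)) - r2 * l * (r2 / l - 1)
  <= r1 ^ 2 * ln (1 + (r1 / l - 1)) - r1 * l * (r1 / l - 1).
Proof.
  intros Hl Hlr Hr HD HA H1 H2 H3 H4.
  set (t := r1 / r2) in *.
  assert (Hf := ff_nonneg A B D tq t HD HA H1 H2 H3).
  assert (Er : r1 = t * r2) by (unfold t; field; lra).
  replace (1 + (r2 / l - 1)) with (r2 / l) by ring.
  replace (1 + (r1 / l - 1)) with (r1 / l) by ring.
  rewrite !ln_div' by lra.
  assert (Hlt : ln t = ln r1 - ln r2) by (unfold t; rewrite ln_div'; lra).
  assert (Ht1 : 1 <= t) by lra.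
  unfold ff, hh in Hf.
  assert (Hc : (t * A + B) / D * (t - 1) * r2 ^ 2 <= l * (r1 - r2)).
  { assert (E : (t * A + B) / D * (t - 1) * r2 ^ 2 = (A * r1 + B * r2) / D * (r1 - r2))
      by (rewrite Er; field; lra).
    rewrite E. apply Rmult_le_compat_r. lra.
    apply (Rmult_le_reg_r D); try lra. field_simplify; lra. }
  assert (0 <= (t ^ 2 * ln t - (t ^ 2 - 1) + (t * A + B) / D * (t - 1)) * r2 ^ 2)
    by (apply Rmult_le_pos; [lra| apply pow2_ge_0]).
  assert (E2 : (t ^ 2 * ln t - (t ^ 2 - 1)) * r2 ^ 2 = r1 ^ 2 * (ln r1 - ln r2) - r1 ^ 2 + r2 ^ 2)
    by (rewrite <- Hlt, Er; ring).
  assert (E3 : r2 * l * (r2 / l - 1) = r2 ^ 2 - r2 * l) by (field; lra).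
  assert (E4 : r1 * l * (r1 / l - 1) = r1 ^ 2 - r1 * l) by (field; lra).
  rewrite E3, E4. nra.
Qed.

Lemma lnle x y : 0 < x -> x <= y -> ln x <= ln y.
Proof. intros. destruct H0. left; apply ln_increasing; lra. subst; lra. Qed.

Lemma th_anti (I : nat) (theta : nat -> R) :
  (forall i, (1 <= i < I)%nat -> theta (i + 1)%nat < theta i) ->
  forall i j, (1 <= i)%nat -> (i < j)%nat -> (j <= I)%nat -> theta j < theta i.
Proof.
  intros H i j Hi Hij HjI. induction Hij.
  - replace (S i) with (i + 1)%nat by lia. apply H; lia.
  - assert (theta m < theta i) by (apply IHHij; lia).
    replace (S m) with (m + 1)%nat by lia.
    assert (theta (m + 1)%nat < theta m) by (apply H; lia). lra.
Qed.

Theorem theorem6 (Stot : R) (I : nat) (N : nat -> nat) (theta : nat -> R) (K : nat) :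
  0 < Stot ->
  (1 <= I)%nat ->
  (forall i, (1 <= i <= I)%nat -> (0 < N i)%nat) ->
  (forall i, (1 <= i <= I)%nat -> 0 < theta i) ->
  (forall i, (1 <= i < I)%nat -> theta (i + 1)%nat < theta i) ->
  (* K = max { k in 1..I | theta_k > lambda(k) } *)
  (1 <= K <= I)%nat ->
  lam Stot N theta K < theta K ->
  (forall k, (K < k <= I)%nat -> ~ (lam Stot N theta k < theta k)) ->
  let lstar := lam Stot N theta K in
  (forall q, (1 <= q <= K - 1)%nat ->
     exists! t, 1 < t /\ teq Stot N K q t = 0)
  /\
  (forall tq : nat -> R,
     (forall q, (1 <= q <= K - 1)%nat -> 1 < tq q /\ teq Stot N K q (tq q) = 0) ->
     (forall q, (1 <= q <= K - 1)%nat -> tq q <= sqrt (theta q / theta (q + 1)%nat)) ->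
     exists th : nat -> R,
       (forall q, (1 <= q < K - 1)%nat -> th (q + 1)%nat < th q) /\
       (forall q, (1 <= q <= K - 1)%nat -> 0 < th q) /\
       forall pm : R -> R,
         (* pm is the menu: p(s) = p*_q for s^q_th < s <= s^{q-1}_th, s^0_th = +oo *)
         (forall q s, (1 <= q <= K)%nat -> lowth th K q < s ->
            (q = 1%nat \/ s <= th (q - 1)%nat) -> pm s = pstar theta lstar q) ->
         (forall i, (1 <= i <= K)%nat ->
            0 <= sstar theta lstar i /\
            (forall s, 0 <= s ->
               surplus theta pm i s <= surplus theta pm i (sstar theta lstar i)) /\
            pm (sstar theta lstar i) = pstar theta lstar i) /\
         sumR (fun i => INR (N i) * pm (sstar theta lstar i) * sstar theta lstar i) K
         = sumR (fun i => INR (N i) * pstar theta lstar i * sstar theta lstar i) K).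
Proof.
  intros HS HI HN Hth Hdec HK HlamK Hmax lstar.
  set (D := Stot + sumR (fun i => INR (N i)) K).
  set (Sig := sumR (fun i => INR (N i) * sqrt (theta i)) K).
  assert (HNR : forall k, (1 <= k <= K)%nat -> 0 < INR (N k)).
  { intros. apply lt_0_INR. apply HN. lia. }
  assert (HthK : forall k, (1 <= k <= K)%nat -> 0 < theta k) by (intros; apply Hth; lia).
  assert (HD : 0 < D).
  { unfold D. assert (0 < sumR (fun i => INR (N i)) K) by (apply sumR_pos; [auto| lia]). lra. }
  assert (HSig : 0 < Sig).
  { unfold Sig. apply sumR_pos; [|lia]. intros. apply Rmult_lt_0_compat; auto.
    apply sqrt_lt_R0; auto. }
  set (l := sqrt lstar).
  assert (Hl : l = Sig / D).
  { unfold l, lstar, lam. apply sqrt_pow2. left; apply Rdiv_lt_0_compat; auto. }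
  assert (Hlpos : 0 < l) by (rewrite Hl; apply Rdiv_lt_0_compat; auto).
  assert (Hlst : 0 <= lstar) by (unfold lstar, lam; apply pow2_ge_0).
  assert (Hlsq : lstar = l ^ 2) by (unfold l; rewrite pow2_sqrt; auto).
  assert (Hlstpos : 0 < lstar) by (rewrite Hlsq; apply pow_lt; auto).
  assert (Hmono : forall i j, (1 <= i <= j)%nat -> (j <= K)%nat -> theta j <= theta i).
  { intros i j Hij HjK. destruct (Nat.eq_dec i j). subst; lra.
    left. apply (th_anti I theta Hdec); lia. }
  assert (Hgt : forall k, (1 <= k <= K)%nat -> lstar < theta k).
  { intros. assert (theta K <= theta k) by (apply Hmono; lia). unfold lstar; lra. }
  set (r := fun k => sqrt (theta k)).
  assert (Hrl : forall k, (1 <= k <= K)%nat -> l < r k).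
  { intros. unfold l, r. apply sqrt_lt_1; auto. left; auto. }
  assert (Hrmono : forall i j, (1 <= i <= j)%nat -> (j <= K)%nat -> r j <= r i).
  { intros. unfold r. apply sqrt_le_1; try (left; apply HthK; lia). apply Hmono; lia. }
  assert (Hrsq : forall k, (1 <= k <= K)%nat -> theta k = r k ^ 2).
  { intros. unfold r. rewrite pow2_sqrt; auto. left; auto. }
  assert (HSst : forall k, (1 <= k <= K)%nat -> sstar theta lstar k = r k / l - 1).
  { intros. unfold sstar, r, l. rewrite sqrt_div_alt; auto. }
  assert (HPst : forall k, (1 <= k <= K)%nat -> pstar theta lstar k = r k * l).
  { intros. unfold pstar, r, l. rewrite sqrt_mult_alt; auto. left; auto. }
  assert (Hspos : forall k, (1 <= k <= K)%nat -> 0 < sstar theta lstar k).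
  { intros. rewrite HSst by auto. assert (l < r k) by auto.
    assert (1 < r k / l). { apply (Rmult_lt_reg_r l); auto. field_simplify; lra. } lra. }
  split.
  - intros q Hq.
    change (exists! t, 1 < t /\ ff (sumR (fun k => INR (N k)) q) (INR (N (q + 1)%nat)) D t = 0).
    apply ff_root.
    + apply sumR_pos; [intros; apply HNR; lia| lia].
    + apply pos_INR.
    + auto.
    + assert (E : sumR (fun k => INR (N k)) q + INR (N (q + 1)%nat) = sumR (fun k => INR (N k)) (S q)).
      { simpl. replace (q + 1)%nat with (S q) by lia. auto. }
      rewrite E. assert (sumR (fun k => INR (N k)) (S q) <= sumR (fun k => INR (N k)) K).
      { apply sumR_mono. intros; left; apply HNR; lia. lia. }
      unfold D; lra.
  - intros tq Htq Htq2.
    exists (fun q => sstar theta lstar (q + 1)).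
    split; [|split].
    + intros q Hq. rewrite !HSst by lia.
      assert (r (q + 1 + 1)%nat < r (q + 1)%nat).
      { unfold r. apply sqrt_lt_1; try (left; apply HthK; lia).
        apply (th_anti I theta Hdec); lia. }
      assert (r (q + 1 + 1)%nat / l < r (q + 1)%nat / l).
      { apply Rmult_lt_compat_r; auto. apply Rinv_0_lt_compat; auto. }
      lra.
    + intros q Hq. apply Hspos. lia.
    + intros pm Hpm.
      assert (Hown : forall i, (1 <= i <= K)%nat -> pm (sstar theta lstar i) = pstar theta lstar i).
      { intros i Hi. apply Hpm; auto.
        - unfold lowth. destruct (i <? K)%nat eqn:E.
          + apply Nat.ltb_lt in E. rewrite !HSst by lia.
            assert (r (i + 1)%nat < r i).
            { unfold r. apply sqrt_lt_1; try (left; apply HthK; lia).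
              apply (th_anti I theta Hdec); lia. }
            assert (r (i + 1)%nat / l < r i / l).
            { apply Rmult_lt_compat_r; auto. apply Rinv_0_lt_compat; auto. }
            lra.
          + apply Hspos; auto.
        - destruct (Nat.eq_dec i 1). left; auto. right.
          replace (i - 1 + 1)%nat with i by lia. lra. }
      set (V := fun i j => theta i * ln (1 + sstar theta lstar j) - pstar theta lstar j * sstar theta lstar j).
      assert (Hadj : forall q, (1 <= q <= K - 1)%nat -> V q (q + 1)%nat <= V q q).
      { intros q Hq. unfold V. rewrite !HSst, !HPst by lia. rewrite (Hrsq q) by lia.
        destruct (Htq q Hq) as [Ht1 Ht2].
        apply (adjIC (r q) (r (q + 1)%nat) l (sumR (fun k => INR (N k)) q) (INR (N (q + 1)%nat)) D (tq q)); auto.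
        - apply Hrl; lia.
        - apply Hrmono; lia.
        - left. apply sumR_pos; [intros; apply HNR; lia| lia].
        - unfold r. rewrite <- sqrt_div_alt by (apply HthK; lia). apply Htq2; auto.
        - assert (E : l * D = Sig) by (rewrite Hl; field; lra). rewrite E. unfold Sig.
          apply Rle_trans with (sumR (fun i => INR (N i) * sqrt (theta i)) (S q)).
          + simpl. replace (S q) with (q + 1)%nat by lia.
            rewrite <- sumR_scal.
            assert (sumR (fun k => INR (N k) * r q) q <= sumR (fun i => INR (N i) * sqrt (theta i)) q).
            { apply sumR_le. intros k Hk. apply Rmult_le_compat_l. apply pos_INR.
              apply Hrmono; lia. }
            unfold r in *. lra.
          + apply sumR_mono; [|lia]. intros. left. apply Rmult_lt_0_compat. apply HNR; lia.
            apply sqrt_lt_R0; apply HthK; lia. }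
      assert (Hchain : forall d i, (1 <= i)%nat -> (i + d <= K)%nat -> V i (i + d)%nat <= V i i).
      { induction d; intros i Hi Hid.
        - rewrite Nat.add_0_r. lra.
        - assert (IH := IHd i Hi ltac:(lia)).
          set (j := (i + d)%nat) in *.
          replace (i + S d)%nat with (j + 1)%nat by (unfold j; lia).
          assert (Hj := Hadj j ltac:(unfold j; lia)).
          unfold V in *.
          assert (theta j <= theta i) by (apply Hmono; unfold j; lia).
          assert (ln (1 + sstar theta lstar (j + 1)%nat) <= ln (1 + sstar theta lstar j)).
          { apply lnle. assert (0 < sstar theta lstar (j + 1)%nat) by (apply Hspos; unfold j; lia). lra.
            rewrite !HSst by (unfold j; lia).
            assert (r (j + 1)%nat <= r j) by (apply Hrmono; unfold j; lia).
            assert (r (j + 1)%nat / l <= r j / l).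
            { apply Rmult_le_compat_r; auto. left; apply Rinv_0_lt_compat; auto. }
            lra. }
          nra. }
      assert (Hopt : forall i s, (1 <= i <= K)%nat -> -1 < s ->
        theta i * ln (1 + s) - pstar theta lstar i * s <= V i i).
      { intros i s Hi Hs. unfold V.
        assert (E : 1 + sstar theta lstar i = theta i / pstar theta lstar i).
        { rewrite HSst, HPst, (Hrsq i) by auto. field. split; [lra|]. assert (l < r i) by auto. lra. }
        rewrite E.
        replace (sstar theta lstar i) with (theta i / pstar theta lstar i - 1) by lra.
        apply surpU; auto. rewrite HPst by auto. assert (l < r i) by auto.
        apply Rmult_lt_0_compat; lra. }
      split.
      * intros i Hi. split; [left; apply Hspos; auto|]. split; [|apply Hown; auto].
        intros s Hs0. unfold surplus. rewrite (Hown i Hi). fold (V i i).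
        destruct Hs0 as [Hs0|Hs0].
        -- destruct (band (fun q => sstar theta lstar (q + 1)) K s ltac:(lia) Hs0) as [j [Hj [Hlow Hup]]].
           rewrite (Hpm j s Hj Hlow Hup).
           destruct (Compare_dec.le_lt_dec j i).
           ++ assert (pstar theta lstar i <= pstar theta lstar j).
              { rewrite !HPst by lia. apply Rmult_le_compat_r; [lra|]. apply Hrmono; lia. }
              assert (theta i * ln (1 + s) - pstar theta lstar i * s <= V i i) by (apply Hopt; auto; lra).
              nra.
           ++ destruct Hup as [Hup|Hup]; [lia|].
              replace (j - 1 + 1)%nat with j in Hup by lia.
              apply Rle_trans with (V i j).
              ** unfold V. apply surpM; auto.
                 --- rewrite HPst by lia. apply Rmult_lt_0_compat; [|lra]. assert (l < r j) by (apply Hrl; lia). lra.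
                 --- lra.
                 --- rewrite HSst, HPst by lia.
                     assert (E : r j * l * (1 + (r j / l - 1)) = theta j) by (rewrite (Hrsq j) by lia; field; lra).
                     rewrite E. apply Hmono; lia.
              ** replace j with (i + (j - i))%nat by lia. apply Hchain; lia.
        -- subst s. rewrite Rplus_0_r, ln_1.
           assert (theta i * ln (1 + 0) - pstar theta lstar i * 0 <= V i i) by (apply Hopt; auto; lra).
           rewrite Rplus_0_r, ln_1 in H. lra.
      * apply sumR_ext. intros i Hi. rewrite Hown; auto.
Qed.
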